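(* Let $\mathcal{H}_1=\mathcal{H}_{A_1}\otimes\mathcal{H}_{B_1}$ and $\mathcal{H}_2=\mathcal{H}_{A_2}\otimes\mathcal{H}_{B_2}$ be finite-dimensional bipartite Hilbert spaces, and let $N,K\geq 1$ be integers. Let $\sigma$ be a positive semidefinite operator on $\mathcal{H}_1$ with Schmidt number $N$ (with respect to the split $A_1|B_1$). Let $\eta$ be an operator on $\mathcal{H}_2$ that is positive on states with Schmidt number $KN$ (with respect to the split $A_2|B_2$). Then the operator $\sigma\otimes\eta$, acting on $\mathcal{H}_1\otimes\mathcal{H}_2\cong\mathcal{H}_A\otimes\mathcal{H}_B$ with $\mathcal{H}_A=\mathcal{H}_{A_1}\otimes\mathcal{H}_{A_2}$ and $\mathcal{H}_B=\mathcal{H}_{B_1}\otimes\mathcal{H}_{B_2}$, is positive on states with Schmidt number $K$ (with respect to the split $A|B$).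
   Context: The Schmidt rank of a pure vector $|\psi\rangle\in\mathcal{H}_X\otimes\mathcal{H}_Y$ is the number of nonzero terms in its Schmidt decomposition. The Schmidt number of a positive semidefinite operator $\rho$ on $\mathcal{H}_X\otimes\mathcal{H}_Y$ is the smallest $k$ such that $\rho$ can be written as a nonnegative combination of projectors $|\psi_i\rangle\langle\psi_i|$ onto vectors of Schmidt rank at most $k$. A Hermitian operator $X$ is said to be positive on states with Schmidt number $k$ if $\langle\psi|X|\psi\rangle\geq 0$ for every vector $|\psi\rangle$ of Schmidt rank at most $k$ (equivalently $\mathrm{Tr}(X\rho)\geq 0$ for every state $\rho$ of Schmidt number at most $k$). *)

(* Defs.v *)
From HB Require Import structures.
From mathcomp Require Import all_boot all_order all_algebra.
Set Implicit Arguments. Unset Strict Implicit. Unset Printing Implicit Defensive.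
Import Order.TTheory GRing.Theory Num.Theory.
Local Open Scope ring_scope.

Section Bipartite.
Variable C : numClosedFieldType.

Definition adjmx (m n : nat) (A : 'M[C]_(m, n)) : 'M[C]_(n, m) :=
  (map_mx Num.conj A)^T.

Definition hermitian (n : nat) (X : 'M[C]_n) : Prop := adjmx X = X.

(* H_X ⊗ H_Y = C^(dX*dY); basis vector |i>⊗|j> has index mxvec_index i j
   (the same convention as the Kronecker product tensmx). *)
Definition split_idx (m n : nat) (k : 'I_(m * n)) : 'I_m * 'I_n :=
  enum_val (cast_ord (esym (mxvec_cast m n)) k).

(* coefficient matrix psi_{ij} of a vector psi = sum_ij psi_ij |i>|j> *)
Definition coef_mx (dX dY : nat) (psi : 'cV[C]_(dX * dY)) : 'M[C]_(dX, dY) :=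
  vec_mx psi^T.

(* Schmidt rank = number of nonzero Schmidt coefficients
   = rank of the coefficient matrix *)
Definition schmidt_rank (dX dY : nat) (psi : 'cV[C]_(dX * dY)) : nat :=
  \rank (coef_mx psi).

Definition schmidt_number_le (dX dY : nat) (k : nat) (rho : 'M[C]_(dX * dY))
  : Prop :=
  exists (r : nat) (p : 'I_r -> C) (psi : 'I_r -> 'cV[C]_(dX * dY)),
    (forall i, 0 <= p i) /\ (forall i, (schmidt_rank (psi i) <= k)%N) /\
    rho = \sum_(i < r) p i *: (psi i *m adjmx (psi i)).

Definition schmidt_number_eq (dX dY : nat) (k : nat) (rho : 'M[C]_(dX * dY))
  : Prop :=
  schmidt_number_le k rho /\ forall k', schmidt_number_le k' rho -> (k <= k')%N.

Definition psd (n : nat) (X : 'M[C]_n) : Prop :=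
  hermitian X /\ forall v : 'cV[C]_n, 0 <= (adjmx v *m X *m v) 0 0.

Definition positive_on_SN (dX dY : nat) (k : nat) (X : 'M[C]_(dX * dY))
  : Prop :=
  hermitian X /\
  forall psi : 'cV[C]_(dX * dY), (schmidt_rank psi <= k)%N ->
    0 <= (adjmx psi *m X *m psi) 0 0.

(* sigma on (A1 ⊗ B1), eta on (A2 ⊗ B2);  sigma ⊗ eta regarded as an
   operator on (A1 ⊗ A2) ⊗ (B1 ⊗ B2). *)
Definition tensor_AB (a1 b1 a2 b2 : nat)
  (sigma : 'M[C]_(a1 * b1)) (eta : 'M[C]_(a2 * b2))
  : 'M[C]_((a1 * a2) * (b1 * b2)) :=
  \matrix_(r, c)
    let: (ra, rb) := split_idx r in
    let: (ca, cb) := split_idx c in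
    let: (ra1, ra2) := split_idx ra in
    let: (rb1, rb2) := split_idx rb in
    let: (ca1, ca2) := split_idx ca in
    let: (cb1, cb2) := split_idx cb in
    sigma (mxvec_index ra1 rb1) (mxvec_index ca1 cb1) *
    eta (mxvec_index ra2 rb2) (mxvec_index ca2 cb2).

End Bipartite.

(* Main.v *)
Require Import Defs.
From HB Require Import structures.
From mathcomp Require Import all_boot all_order all_algebra.
From mathcomp Require Import ring.
Set Implicit Arguments. Unset Strict Implicit. Unset Printing Implicit Defensive.
Import Order.TTheory GRing.Theory Num.Theory.
Local Open Scope ring_scope.
Section Helpers.
Variable C : numClosedFieldType.

Lemma split_idxK (m n : nat) (i : 'I_m) (j : 'I_n) :
  split_idx (mxvec_index i j) = (i, j).
Proof. by rewrite /split_idx /mxvec_index cast_ordK enum_rankK. Qed.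

Lemma mxvec_indexK (m n : nat) (k : 'I_(m * n)) :
  mxvec_index (split_idx k).1 (split_idx k).2 = k.
Proof.
rewrite /split_idx /mxvec_index -surjective_pairing enum_valK.
exact: cast_ordKV.
Qed.

Lemma sum_idx (m n : nat) (F : 'I_(m * n) -> C) :
  \sum_(k < m * n) F k = \sum_(i < m) \sum_(j < n) F (mxvec_index i j).
Proof.
rewrite pair_big /=.
rewrite (reindex (fun p : 'I_m * 'I_n => mxvec_index p.1 p.2)) //=.
exists (@split_idx m n) => [p _|k _]; last exact: mxvec_indexK.
by rewrite split_idxK -surjective_pairing.
Qed.

Lemma mxvec_index_eq (m n : nat) (i i' : 'I_m) (j j' : 'I_n) :
  (mxvec_index i j == mxvec_index i' j') = (i == i') && (j == j').
Proof.
apply/eqP/andP => [h|[/eqP-> /eqP->]] //.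
have := congr1 (@split_idx m n) h; rewrite !split_idxK => -[-> ->]; by [].
Qed.

Lemma adjmxE (m n : nat) (A : 'M[C]_(m, n)) i j : adjmx A i j = Num.conj (A j i).
Proof. by rewrite /adjmx !mxE. Qed.

Lemma adjmx_mul (m n p : nat) (A : 'M[C]_(m, n)) (B : 'M[C]_(n, p)) :
  adjmx (A *m B) = adjmx B *m adjmx A.
Proof. by rewrite /adjmx map_mxM trmx_mul. Qed.

Lemma quadE (n : nat) (v : 'cV[C]_n) (X : 'M[C]_n) :
  (adjmx v *m X *m v) 0 0 = \sum_r \sum_c Num.conj (v r 0) * X r c * v c 0.
Proof.
rewrite mxE exchange_big; apply: eq_bigr => c _; rewrite mxE mulr_suml.
by apply: eq_bigr => r _; rewrite adjmxE.
Qed.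

Lemma herm_entry (n : nat) (X : 'M[C]_n) : Defs.hermitian X -> forall i j, Num.conj (X i j) = X j i.
Proof. by move=> h i j; rewrite -adjmxE h. Qed.

Lemma sum_delta (T : finType) (a : T) (F : T -> C) :
  \sum_x (a == x)%:R * F x = F a.
Proof.
rewrite (bigD1 a) //= eqxx mul1r big1 ?addr0 // => x /negbTE.
by rewrite eq_sym => ->; rewrite mul0r.
Qed.

End Helpers.
Section T.
Variable C : numClosedFieldType.
Variables a1 b1 a2 b2 : nat.

Definition contr (phi : 'cV[C]_(a1 * b1)) : 'M[C]_(a2 * b2, (a1 * a2) * (b1 * b2)) :=
  \matrix_(l, r)
    let: (ra, rb) := split_idx r in
    let: (ra1, ra2) := split_idx ra in
    let: (rb1, rb2) := split_idx rb in
    (l == mxvec_index ra2 rb2)%:R * Num.conj (phi (mxvec_index ra1 rb1) 0).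

Lemma tensor_contr (phi : 'cV[C]_(a1 * b1)) (eta : 'M[C]_(a2 * b2)) :
  tensor_AB (phi *m adjmx phi) eta = adjmx (contr phi) *m eta *m contr phi.
Proof.
apply/matrixP => r c; rewrite !mxE.
under eq_bigr => l _ do rewrite !mxE.
under eq_bigr => l _ do (under eq_bigr => k _ do rewrite adjmxE !mxE).
case: (split_idx r) => ra rb; case: (split_idx ra) => ra1 ra2;
case: (split_idx rb) => rb1 rb2.
case: (split_idx c) => ca cb; case: (split_idx ca) => ca1 ca2;
case: (split_idx cb) => cb1 cb2.
rewrite mxE big_ord1 adjmxE.
under eq_bigr => l _ do (under eq_bigr => k _ do rewrite rmorphM rmorph_nat /= conjCK).
under eq_bigr => l _ do rewrite mulr_suml.
rewrite exchange_big /=.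
set p := phi (mxvec_index ra1 rb1) 0; set q := Num.conj (phi (mxvec_index ca1 cb1) 0).
rewrite (eq_bigr (fun k => (mxvec_index ra2 rb2 == k)%:R * (p * eta k (mxvec_index ca2 cb2) * q))).
  by rewrite sum_delta mulrAC.
move=> k _.
rewrite (eq_bigr (fun l => (mxvec_index ca2 cb2 == l)%:R * ((k == mxvec_index ra2 rb2)%:R * p * eta k l * q))).
  by rewrite sum_delta eq_sym; ring.
by move=> l _; rewrite [_ == l]eq_sym; ring.
Qed.

End T.
Section R.
Variable C : numClosedFieldType.

Lemma sum_delta2 (T U : finType) (a : T) (b : U) (F : T -> U -> C) :
  \sum_x \sum_y ((a == x) && (b == y))%:R * F x y = F a b.
Proof.
rewrite pair_big /=.
rewrite (eq_bigr (fun p => ((a,b) == p)%:R * F p.1 p.2)) ?sum_delta // => -[x y] _.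
Qed.

Definition chimx (a1 b1 a2 b2 : nat) (Phi : 'M[C]_(a1, b1)) (Psi : 'M[C]_(a1 * a2, b1 * b2))
  : 'M[C]_(a2, b2) :=
  \matrix_(i < a2, j < b2) \sum_(a < a1) \sum_(b < b1)
     Num.conj (Phi a b) * Psi (mxvec_index a i) (mxvec_index b j).

Lemma rank_chi (a1 b1 a2 b2 r k : nat) (L : 'M[C]_(a1, r)) (R : 'M[C]_(r, b1))
  (X : 'M[C]_(a1 * a2, k)) (Y : 'M[C]_(k, b1 * b2)) :
  (\rank (chimx (L *m R) (X *m Y)) <= r * k)%N.
Proof.
set U : 'M[C]_(a2, r * k) := \matrix_(i, st) \sum_(a < a1)
   Num.conj (L a (split_idx st).1) * X (mxvec_index a i) (split_idx st).2.
set V : 'M[C]_(r * k, b2) := \matrix_(st, j) \sum_(b < b1)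
   Num.conj (R (split_idx st).1 b) * Y (split_idx st).2 (mxvec_index b j).
suff -> : chimx (L *m R) (X *m Y) = U *m V.
  exact: leq_trans (mxrankM_maxl _ _) (rank_leq_col _).
apply/matrixP => i j; rewrite !mxE sum_idx.
pose T a b s t := Num.conj (L a s) * Num.conj (R s b) * X (mxvec_index a i) t * Y t (mxvec_index b j).
transitivity (\sum_(a < a1) \sum_(b < b1) \sum_(s < r) \sum_(t < k) T a b s t).
  apply: eq_bigr => a _; apply: eq_bigr => b _.
  rewrite !mxE rmorph_sum mulr_suml; apply: eq_bigr => s _.
  rewrite mulr_sumr; apply: eq_bigr => t _; rewrite rmorphM /= /T; ring.
transitivity (\sum_(s < r) \sum_(t < k) \sum_(a < a1) \sum_(b < b1) T a b s t).
  rewrite pair_big [RHS]pair_big /=.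
  under eq_bigr => ab _ do rewrite pair_big /=.
  under [RHS]eq_bigr => st _ do rewrite pair_big /=.
  by rewrite exchange_big.
apply: eq_bigr => s _; apply: eq_bigr => t _.
rewrite !mxE !split_idxK /= mulr_suml; apply: eq_bigr => a _.
rewrite mulr_sumr; apply: eq_bigr => b _; rewrite /T; ring.
Qed.

End R.
Section M.
Variable C : numClosedFieldType.
Variables a1 b1 a2 b2 : nat.

Lemma coef_entry (m n : nat) (v : 'cV[C]_(m * n)) i j : coef_mx v i j = v (mxvec_index i j) 0.
Proof. by rewrite /coef_mx !mxE. Qed.

Lemma chi_coef (phi : 'cV[C]_(a1 * b1)) (psi : 'cV[C]_((a1 * a2) * (b1 * b2))) :
  coef_mx (contr a2 b2 phi *m psi) = chimx (coef_mx phi) (coef_mx psi).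
Proof.
apply/matrixP => i j; rewrite coef_entry !mxE sum_idx sum_idx.
apply: eq_bigr => a _.
under eq_bigr => x _ do rewrite sum_idx.
rewrite exchange_big; apply: eq_bigr => b _.
rewrite !coef_entry.
rewrite -[RHS](sum_delta2 i j (fun x y => Num.conj (phi (mxvec_index a b) 0) *
   psi (mxvec_index (mxvec_index a x) (mxvec_index b y)) 0)).
apply: eq_bigr => x _; apply: eq_bigr => y _.
by rewrite !mxE !split_idxK /= mxvec_index_eq mulrA.
Qed.

End M.
Section N.
Variable C : numClosedFieldType.
Variables a1 b1 a2 b2 : nat.

Lemma tensor_sum (n : nat) (p : 'I_n -> C) (X : 'I_n -> 'M[C]_(a1 * b1)) (eta : 'M[C]_(a2 * b2)) :
  tensor_AB (\sum_i p i *: X i) eta = \sum_i p i *: tensor_AB (X i) eta.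
Proof.
apply/matrixP => r c; rewrite !mxE summxE.
under [RHS]eq_bigr => i _ do rewrite !mxE.
case: (split_idx r) => ra rb; case: (split_idx ra) => ra1 ra2;
case: (split_idx rb) => rb1 rb2.
case: (split_idx c) => ca cb; case: (split_idx ca) => ca1 ca2;
case: (split_idx cb) => cb1 cb2.
rewrite summxE mulr_suml; apply: eq_bigr => i _; by rewrite !mxE mulrA.
Qed.

Lemma herm_tensor (s : 'M[C]_(a1 * b1)) (e : 'M[C]_(a2 * b2)) :
  Defs.hermitian s -> Defs.hermitian e -> Defs.hermitian (tensor_AB s e).
Proof.
move=> hs he; apply/matrixP => r c; rewrite adjmxE !mxE.
case: (split_idx r) => ra rb; case: (split_idx ra) => ra1 ra2;
case: (split_idx rb) => rb1 rb2.
case: (split_idx c) => ca cb; case: (split_idx ca) => ca1 ca2;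
case: (split_idx cb) => cb1 cb2.
by rewrite rmorphM /= !herm_entry.
Qed.

End N.

Lemma quad_sum (C : numClosedFieldType) (m n : nat) (v : 'cV[C]_m) (p : 'I_n -> C) (T : 'I_n -> 'M[C]_m) :
  (adjmx v *m (\sum_i p i *: T i) *m v) 0 0 = \sum_i p i * (adjmx v *m T i *m v) 0 0.
Proof.
rewrite mulmx_sumr mulmx_suml summxE; apply: eq_bigr => i _.
by rewrite -scalemxAr -scalemxAl mxE.
Qed.

Theorem lemma1 (C : numClosedFieldType) (a1 b1 a2 b2 : nat) (N K : nat)
  (sigma : 'M[C]_(a1 * b1)) (eta : 'M[C]_(a2 * b2)) :
  (1 <= N)%N -> (1 <= K)%N ->
  psd sigma -> schmidt_number_eq N sigma ->
  positive_on_SN (K * N) eta ->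
  positive_on_SN K (tensor_AB sigma eta).
Proof.
move=> _ _ [hs _] [[r [p [phi [hp [hrk Es]]]]] _] [heta Heta].
split; first exact: herm_tensor.
move=> psi hpsi; rewrite Es tensor_sum quad_sum.
apply: sumr_ge0 => i _; apply: mulr_ge0 (hp i) _.
have -> : adjmx psi *m tensor_AB (phi i *m adjmx (phi i)) eta *m psi =
    adjmx (contr a2 b2 (phi i) *m psi) *m eta *m (contr a2 b2 (phi i) *m psi).
  by rewrite tensor_contr adjmx_mul !mulmxA.
apply: Heta; rewrite /schmidt_rank chi_coef.
rewrite -(mulmx_base (coef_mx (phi i))) -(mulmx_base (coef_mx psi)).
apply: leq_trans (rank_chi _ _ _ _) _.
by rewrite mulnC; apply: leq_mul; [exact: hpsi | exact: hrk].
Qed.
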